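(* Let $\mathcal{C}=(\mathcal{T},\mathcal{I},\mathcal{R})$ be an extraction context with thresholds \textit{minsupp} and \textit{minbond}. Then $\mathcal{RCPR}=\mathcal{CRCP}\cup\mathcal{MRCP}$, with each element $J$ recorded together with $\mathit{Supp}(\wedge J)$ and $\mathit{bond}(J)$, is an exact concise representation of the set $\mathcal{RCP}$ of rare correlated patterns.
   Context: An extraction context is a triple $\mathcal{C}=(\mathcal{T},\mathcal{I},\mathcal{R})$ with $\mathcal{T}$ a finite set of transactions, $\mathcal{I}$ a finite set of items and $\mathcal{R}\subseteq\mathcal{T}\times\mathcal{I}$. For a pattern $I\subseteq\mathcal{I}$: $\mathit{Supp}(\wedge I)=|\{t:\forall i\in I,(t,i)\in\mathcal{R}\}|$, $\mathit{Supp}(\vee I)=|\{t:\exists i\in I,(t,i)\in\mathcal{R}\}|$, and for nonempty $I$, $\mathit{bond}(I)=\mathit{Supp}(\wedge I)/\mathit{Supp}(\vee I)$ (with $\mathit{bond}(\emptyset)=+\infty$ by convention). $\mathcal{RCP}=\{I\subseteq\mathcal{I}:\mathit{Supp}(\wedge I)<\textit{minsupp},\ \mathit{bond}(I)\ge\textit{minbond}\}$. Closed rare correlated patterns: $\mathcal{CRCP}=\{I\in\mathcal{RCP}:\forall I_1\supsetneq I,\ \mathit{bond}(I)>\mathit{bond}(I_1)\}$. Minimal rare correlated patterns: $\mathcal{MRCP}=\{I\in\mathcal{RCP}:\forall I_1\subsetneq I,\ \mathit{bond}(I)<\mathit{bond}(I_1)\}$. A family $\mathcal{S}\subseteq\mathcal{RCP}$,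 with each $J\in\mathcal{S}$ recorded together with $\mathit{Supp}(\wedge J)$ and $\mathit{bond}(J)$, is an exact concise representation of $\mathcal{RCP}$ if, for every pattern $I\subseteq\mathcal{I}$, the recorded data $\{(J,\mathit{Supp}(\wedge J),\mathit{bond}(J)):J\in\mathcal{S}\}$ alone suffice to decide whether $I\in\mathcal{RCP}$ and, when $I\in\mathcal{RCP}$, to determine exactly $\mathit{Supp}(\wedge I)$ and $\mathit{bond}(I)$. *)

(* Defs.v *)
From mathcomp Require Import all_boot all_order all_algebra.
Set Implicit Arguments. Unset Strict Implicit. Unset Printing Implicit Defensive.
Import Order.TTheory GRing.Theory Num.Theory.
Local Open Scope ring_scope.

(* Extended bond values: [None] stands for +infinity, [Some q] for q : rat. *)
Definition ext_le (a b : option rat) : bool :=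
  match a, b with
  | _, None => true
  | None, Some _ => false
  | Some x, Some y => x <= y
  end.
Definition ext_lt (a b : option rat) : bool :=
  match a, b with
  | None, _ => false
  | Some _, None => true
  | Some x, Some y => x < y
  end.

Section Context.
Variables (T I : finType) (R : {set T * I}).

Definition suppAnd (X : {set I}) : nat :=
  #|[set t : T | [forall i in X, (t, i) \in R]]|.
Definition suppOr (X : {set I}) : nat :=
  #|[set t : T | [exists i in X, (t, i) \in R]]|.

(* bond(∅) = +∞ ; otherwise Supp(∧X)/Supp(∨X) (MathComp convention x/0 = 0). *)
Definition bond (X : {set I}) : option rat :=
  if X == set0 then None else Some ((suppAnd X)%:R / (suppOr X)%:R).

Variables (minsupp minbond : rat).

Definition RCP (X : {set I}) : bool :=
  ((suppAnd X)%:R < minsupp) && ext_le (Some minbond) (bond X).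

Definition CRCP (X : {set I}) : bool :=
  RCP X && [forall X1 : {set I}, (X \proper X1) ==> ext_lt (bond X1) (bond X)].

Definition MRCP (X : {set I}) : bool :=
  RCP X && [forall X1 : {set I}, (X1 \proper X) ==> ext_lt (bond X) (bond X1)].

Definition RCPR : {set {set I}} := [set X | CRCP X || MRCP X].

(* The recorded data {(J, Supp(∧J), bond(J)) : J ∈ S}, as a partial map keyed by J. *)
Definition recorded (S : {set {set I}}) : {set I} -> option (nat * option rat) :=
  fun J => if J \in S then Some (suppAnd J, bond J) else None.

End Context.

(* A family selector S (choosing, for each context, a family of patterns) is an
   exact concise representation of RCP if it is always included in RCP and a
   single decoding function, applied to the recorded data only, decides for
   every pattern whether it is in RCP and, if so, returns its Supp(∧) and bond. *)
Definition exact_concise_repr (I : finType) (minsupp minbond : rat)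
    (S : forall T : finType, {set T * I} -> {set {set I}}) : Prop :=
  exists decode : ({set I} -> option (nat * option rat)) -> {set I} ->
                  option (nat * option rat),
    forall (T : finType) (R : {set T * I}),
      (forall J, J \in S T R -> RCP R minsupp minbond J) /\
      (forall X : {set I},
         decode (recorded R (S T R)) X =
         if RCP R minsupp minbond X then Some (suppAnd R X, bond R X) else None).

(* Main.v *)
Require Import Defs.
From mathcomp Require Import all_boot all_order all_algebra.
From mathcomp Require Import zify.
Import Order.TTheory GRing.Theory Num.Theory.

Lemma ratdiv_le (a' a b b' : nat) :
  (a' <= a)%N -> (b <= b')%N -> (a <= b)%N -> (a' <= b')%N ->
  ((a'%:R / b'%:R : rat) <= a%:R / b%:R)%R.
Proof.
move=> h1 h2 h3 h4.
have [->|a'0] := eqVneq a' 0%N.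
  by rewrite mul0r divr_ge0 ?ler0n.
have hb' : (0 < b'%:R :> rat)%R by rewrite ltr0n; lia.
have hb : (0 < b%:R :> rat)%R by rewrite ltr0n; lia.
rewrite ler_pdivrMr // mulrAC ler_pdivlMr // -!natrM ler_nat.
nia.
Qed.

Lemma ratdiv_eq (a' a b b' : nat) :
  (a' <= a)%N -> (b <= b')%N -> (a <= b)%N -> (a' <= b')%N ->
  ((a'%:R / b'%:R : rat) = a%:R / b%:R)%R -> a' = a.
Proof.
move=> h1 h2 h3 h4 e.
have [a0|a0] := eqVneq a 0%N; first lia.
have hb' : (b'%:R != 0 :> rat)%R by rewrite pnatr_eq0; lia.
have hb : (b%:R != 0 :> rat)%R by rewrite pnatr_eq0; lia.
move/eqP: e; rewrite eqr_div // -!natrM eqr_nat => /eqP e.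
nia.
Qed.

Lemma ext_le_anti a b : ext_le a b -> ext_le b a -> a = b.
Proof.
case: a => [x|]; case: b => [y|] //= h1 h2.
by congr Some; apply/eqP; rewrite eq_le h1 h2.
Qed.

Lemma ext_le_trans a b c : ext_le a b -> ext_le b c -> ext_le a c.
Proof.
case: a => [x|]; case: b => [y|]; case: c => [z|] //=; exact: le_trans.
Qed.

Lemma ext_le_lt a b : ext_le a b -> a != b -> ext_lt a b.
Proof.
case: a => [x|]; case: b => [y|] //= h1 h2.
by rewrite lt_neqAle h1 andbT; apply: contra h2 => /eqP ->.
Qed.

Section Ctx.
Variables (T I : finType) (R : {set T * I}).

Lemma suppAnd_anti (X Y : {set I}) : X \subset Y -> (suppAnd R Y <= suppAnd R X)%N.
Proof.
move=> sXY; apply: subset_leq_card; apply/subsetP => t.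
rewrite !inE => /forallP H; apply/forallP => i; apply/implyP => iX.
by have := H i; rewrite (subsetP sXY i iX).
Qed.

Lemma suppOr_mono (X Y : {set I}) : X \subset Y -> (suppOr R X <= suppOr R Y)%N.
Proof.
move=> sXY; apply: subset_leq_card; apply/subsetP => t.
rewrite !inE => /existsP [i /andP [iX H]]; apply/existsP; exists i.
by rewrite (subsetP sXY i iX).
Qed.

Lemma suppAnd_le_Or (X : {set I}) : X != set0 -> (suppAnd R X <= suppOr R X)%N.
Proof.
case/set0Pn => i iX; apply: subset_leq_card; apply/subsetP => t.
rewrite !inE => /forallP H; apply/existsP; exists i.
by have := H i; rewrite iX.
Qed.

Lemma bond_anti (X Y : {set I}) : X \subset Y -> ext_le (bond R Y) (bond R X).
Proof.
move=> sXY; rewrite /bond.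
have [X0|X0] := eqVneq X set0; first by case: ifP.
have Y0 : Y != set0.
  apply: contra X0 => /eqP Y0; by rewrite -subset0 -Y0.
rewrite (negbTE Y0) /=.
apply: ratdiv_le; [exact: suppAnd_anti|exact: suppOr_mono|
  exact: suppAnd_le_Or|exact: suppAnd_le_Or].
Qed.

Lemma bond_eq_supp (X Y : {set I}) : X \subset Y -> bond R Y = bond R X ->
  suppAnd R Y = suppAnd R X.
Proof.
move=> sXY; rewrite /bond.
have [->|X0] := eqVneq X set0.
  by case: ifP => [/eqP -> //|].
have Y0 : Y != set0.
  apply: contra X0 => /eqP Y0; by rewrite -subset0 -Y0.
rewrite (negbTE Y0) => -[e].
apply: (ratdiv_eq _ _ _ _ _ _ _ _ e); [exact: suppAnd_anti|exact: suppOr_mono|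
  exact: suppAnd_le_Or|exact: suppAnd_le_Or].
Qed.

End Ctx.

Arguments bond_anti {T I} R {X Y}.
Arguments bond_eq_supp {T I R X Y}.

Definition is_top (I : finType) (rec : {set I} -> option (nat * option rat))
  (X J : {set I}) : bool :=
  match rec J with
  | Some (_, b) => [forall J' : {set I}, (X \subset J') ==>
        match rec J' with Some (_, b') => ext_le b' b | None => true end]
  | None => false
  end.

Arguments is_top {I}.

Definition dec (I : finType) (rec : {set I} -> option (nat * option rat))
  (X : {set I}) : option (nat * option rat) :=
  if [exists J1 : {set I}, exists J2 : {set I}, [&& J1 \subset X, X \subset J2,
        rec J1 != None & rec J2 != None]] then
    match [pick J : {set I} | (X \subset J) && is_top rec X J] with
    | Some J => rec J | None => None end
  else None.

Theorem mainTheorem4 (I : finType) (minsupp minbond : rat) :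
  exact_concise_repr minsupp minbond
    (fun (T : finType) (R : {set T * I}) => RCPR R minsupp minbond).
Proof.
exists (@dec I) => T R.
have RCPRP J : J \in RCPR R minsupp minbond -> RCP R minsupp minbond J.
  by rewrite inE => /orP [/andP [] | /andP []].
split; first exact: RCPRP.
move=> X.
set rec := recorded R (RCPR R minsupp minbond).
have recE J : rec J = if J \in RCPR R minsupp minbond
   then Some (suppAnd R J, bond R J) else None by [].
rewrite /dec.
case: ifP => [/existsP [J1 /existsP [J2 /and4P [s1 s2 r1 r2]]] | Hex].
- have R1 : RCP R minsupp minbond J1.
    by apply: RCPRP; move: r1; rewrite recE; case: ifP.
  have R2 : RCP R minsupp minbond J2.
    by apply: RCPRP; move: r2; rewrite recE; case: ifP.
  have RX : RCP R minsupp minbond X.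
    move: R1 R2; rewrite /RCP => /andP [a1 _] /andP [_ b2]; apply/andP; split.
      apply: le_lt_trans a1; rewrite ler_nat; exact: suppAnd_anti.
    apply: ext_le_trans b2 _; exact: bond_anti.
  rewrite RX.
  pose P := fun Z : {set I} => (X \subset Z) && (bond R Z == bond R X).
  have PX : P X by rewrite /P subxx eqxx.
  case: (arg_maxnP (fun Z : {set I} => #|Z|) PX) => Z /andP [sXZ /eqP bZ] maxZ.
  have ZR : Z \in RCPR R minsupp minbond.
    rewrite inE; apply/orP; left; apply/andP; split.
      move: RX; rewrite /RCP bZ (bond_eq_supp sXZ bZ) //.
    apply/forallP => Z1; apply/implyP => pZ1.
    apply: ext_le_lt; first exact: (bond_anti R (proper_sub pZ1)).
    apply/negP => /eqP e.
    have : P Z1 by rewrite /P (subset_trans sXZ (proper_sub pZ1)) e bZ eqxx.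
    move/maxZ => /= h; have := proper_card pZ1; lia.
  case: pickP => [J /andP [sXJ]|].
  + rewrite /is_top; case e: (rec J) => [[s b]|] // /forallP top.
    move: e; rewrite recE; case: ifP => // JR [es eb].
    subst s b.
    have := top Z; rewrite sXZ recE ZR /= bZ => hle.
    have hge := bond_anti R sXJ.
    have ebJ := ext_le_anti _ _ hge hle.
    by rewrite (bond_eq_supp sXJ ebJ) ebJ.
  + move=> /(_ Z); rewrite sXZ /= /is_top recE ZR /=.
    move/negbT/negP; case; apply/forallP => J'; apply/implyP => sXJ'.
    rewrite recE; case: ifP => // _; rewrite bZ; exact: bond_anti.
- case RX: (RCP R minsupp minbond X) => //.
  pose P := fun Z : {set I} => (X \subset Z) && (bond R Z == bond R X).
  have PX : P X by rewrite /P subxx eqxx.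
  case: (arg_maxnP (fun Z : {set I} => #|Z|) PX) => Z /andP [sXZ /eqP bZ] maxZ.
  pose Q := fun Y : {set I} => (Y \subset X) && (bond R Y == bond R X).
  have QX : Q X by rewrite /Q subxx eqxx.
  case: (arg_minnP (fun Y : {set I} => #|Y|) QX) => Y /andP [sYX /eqP bY] minY.
  move/negbT: Hex => /negP; case; apply/existsP; exists Y; apply/existsP; exists Z.
  rewrite sYX sXZ !recE !inE /=.
  apply/andP; split.
  + case: ifP => //; move/negbT/negP; case; apply/orP; right.
    apply/andP; split.
      move: RX; rewrite /RCP -bY -(bond_eq_supp sYX (esym bY)) //.
    apply/forallP => Y1; apply/implyP => pY1.
    apply: ext_le_lt; first exact: (bond_anti R (proper_sub pY1)).
    apply/negP => /eqP e.
    have : Q Y1 by rewrite /Q (subset_trans (proper_sub pY1) sYX) -e bY eqxx.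
    move/minY => /= h; have := proper_card pY1; lia.
  + case: ifP => //; move/negbT/negP; case; apply/orP; left.
    apply/andP; split.
      move: RX; rewrite /RCP bZ (bond_eq_supp sXZ bZ) //.
    apply/forallP => Z1; apply/implyP => pZ1.
    apply: ext_le_lt; first exact: (bond_anti R (proper_sub pZ1)).
    apply/negP => /eqP e.
    have : P Z1 by rewrite /P (subset_trans sXZ (proper_sub pZ1)) e bZ eqxx.
    move/maxZ => /= h; have := proper_card pZ1; lia.
Qed.
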